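(* For every positive integer $n$, the set $\{S_\alpha : \alpha \models n\}$ of shuffle functions is a basis of the vector space $\mathrm{QSym}_n$.
   Context: A composition $\alpha=(\alpha_1,\dots,\alpha_\ell)$ of $n$ (written $\alpha\models n$) is a finite sequence of positive integers summing to $n$; $\ell(\alpha)=\ell$ is its length. Set $\mathcal{I}(\alpha)=\{\alpha_1,\alpha_1+\alpha_2,\dots,\alpha_1+\cdots+\alpha_{\ell-1}\}\subseteq[n-1]$. For $\alpha,\beta\models n$ write $\beta\le\alpha$ if $\mathcal{I}(\beta)\subseteq\mathcal{I}(\alpha)$ (i.e. $\alpha$ refines $\beta$). The monomial quasisymmetric function is $M_\alpha=\sum_{i_1<\cdots<i_\ell}x_{i_1}^{\alpha_1}\cdots x_{i_\ell}^{\alpha_\ell}$ (in commuting variables $x_1,x_2,\dots$), and $\mathrm{QSym}_n$ is the $\mathbb{C}$-span of $\{M_\alpha:\alpha\models n\}$. For a composition $\alpha=(\alpha_1,\dots,\alpha_\ell)$ let $\mathrm{OtE}(\alpha)=\{i:\alpha_i\text{ odd},\ \alpha_{i+1}\text{ even}\}$. If $\mathrm{OtE}(\alpha)=\{i_1<\cdots<i_k\}$, the odd-min composition is $m_o(\alpha)=(\alpha_1+\cdots+\alpha_{i_1},\ \alpha_{i_1+1}+\cdots+\alpha_{i_2},\ \dots,\ \alpha_{i_k+1}+\cdots+\alpha_\ell)$. For $\beta=(\beta_1,\dots,\beta_p)$ with $m_o(\alpha)\le\beta\le\alpha$, each $\beta_i$ is the sum of a block of consecutive parts of $\alpha$; let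 $\mathrm{O}^\beta_\alpha(i)$ and $\mathrm{E}^\beta_\alpha(i)$ be the numbers of odd and even parts in that block, and set $c_\alpha^\beta=\prod_i \frac{1}{\mathrm{O}^\beta_\alpha(i)!\,\mathrm{E}^\beta_\alpha(i)!}$. The shuffle function is $S_\alpha=\sum_{m_o(\alpha)\le\beta\le\alpha} c_\alpha^\beta M_\beta$. *)

(* Defs.v *)
From HB Require Import structures.
From mathcomp Require Import all_boot all_order all_algebra.
From mathcomp Require Import reals.
From mathcomp Require Import complex.
Set Implicit Arguments. Unset Strict Implicit. Unset Printing Implicit Defensive.
Import Order.TTheory GRing.Theory Num.Theory.
Local Open Scope ring_scope.

Definition is_comp (n : nat) (a : seq nat) : bool :=
  all (fun x => 0 < x)%N a && (sumn a == n).

Fixpoint allseqs (n k : nat) : seq (seq nat) :=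
  if k is k'.+1 then [seq x :: s | x <- iota 0 n.+1, s <- allseqs n k'] else [:: [::]].

Definition comps (n : nat) : seq (seq nat) :=
  undup [seq a <- flatten [seq allseqs n k | k <- iota 0 n.+1] | is_comp n a].

Definition Iset (a : seq nat) : seq nat :=
  [seq sumn (take i a) | i <- iota 1 (size a).-1].

(** b <= a  iff  I(b) \subseteq I(a)  (a refines b) *)
Definition leC (b a : seq nat) : bool := all (fun x => x \in Iset a) (Iset b).

(** Odd-min composition m_o(a): cut a right after every part a_i with
    a_i odd and a_{i+1} even, and sum the parts in each block. *)
Fixpoint mo_aux (acc : nat) (a : seq nat) : seq nat :=
  match a with
  | [::] => [:: acc]
  | x :: rest =>
      match rest with
      | [::] => [:: acc + x]
      | y :: _ => if odd x && ~~ odd y then (acc + x) :: mo_aux 0 rest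
                  else mo_aux (acc + x) rest
      end
  end%N.
Definition mo (a : seq nat) : seq nat := if a is [::] then [::] else mo_aux 0 a.

(** For b <= a, the i-th block of consecutive parts of a summing to b_i. *)
Definition blocks (b a : seq nat) : seq (seq nat) :=
  [seq [seq nth 0%N a j | j <- iota 0 (size a) &
          ((sumn (take i b) <= sumn (take j a)) && (sumn (take j.+1 a) <= sumn (take i.+1 b)))%N]
   | i <- iota 0 (size b)].

Section QSym.
Variable R : realType.
Local Notation C := (R[i]).

Definition coefc (a b : seq nat) : C :=
  \prod_(B <- blocks b a) ((count odd B)`! * (count (fun x => ~~ odd x) B)`!)%:R^-1.

(** Formal power series in commuting variables x_1, x_2, ... are represented
    by their coefficient functions on monomials; a monomial
    x_1^{s_1} ... x_k^{s_k} is represented by its exponent sequence s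
    (trailing zeros being irrelevant for all series considered). *)
Definition series := seq nat -> C.

(** Monomial quasisymmetric function: the coefficient of x^s in M_a is 1 iff
    the nonzero exponents of s, read in increasing index order, form a. *)
Definition Mqs (a : seq nat) : series :=
  fun s => if [seq e <- s | (0 < e)%N] == a then 1 else 0.

Definition Sqs (a : seq nat) : series :=
  fun s => \sum_(b <- comps (sumn a) | leC (mo a) b && leC b a) coefc a b * Mqs b s.

Definition QSym (n : nat) (f : series) : Prop :=
  exists c : seq nat -> C, forall s, f s = \sum_(a <- comps n) c a * Mqs a s.
End QSym.

(* Main.v *)
Require Import Defs.
From HB Require Import structures.
From mathcomp Require Import all_boot all_order all_algebra.
From mathcomp Require Import reals complex.
From mathcomp Require Import zify.
Import Order.TTheory GRing.Theory Num.Theory.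
Set Implicit Arguments. Unset Strict Implicit. Unset Printing Implicit Defensive.

Lemma Iset_cons x r :
  Iset (x :: r) = if r is [::] then [::] else x :: map (addn x) (Iset r).
Proof.
case: r => [|y r] //; rewrite /Iset /= addn0; congr (_ :: _).
rewrite -[2]/(1+1)%N iotaDl -!map_comp; apply: eq_map => i /=.
by [].
Qed.

Lemma Iset_pos_sorted a : all (fun x => 0 < x) a ->
  all (fun e => 0 < e) (Iset a) && sorted ltn (Iset a).
Proof.
elim: a => [|x r IH] //= /andP[x0 rp]; rewrite Iset_cons.
case: r IH rp => [|y r] IH rp //=.
have /andP[IHa IHs] := IH rp.
rewrite x0 /= all_map; apply/andP; split.
  by apply/allP => e /(allP IHa) /= e0; rewrite addn_gt0 x0.
rewrite path_sortedE; last exact: ltn_trans.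
rewrite all_map sorted_map; apply/andP; split.
  by apply/allP => e /(allP IHa) /= e0; rewrite -[X in X < _]addn0 ltn_add2l.
by apply: sub_sorted IHs => u v /=; rewrite ltn_add2l.
Qed.

Lemma Iset_inj a b : a != [::] -> b != [::] -> Iset a = Iset b -> sumn a = sumn b -> a = b.
Proof.
elim: a b => [|x r IH] [|y t] //= _ _; rewrite !Iset_cons.
case: r IH => [|x' r] IH; case: t => [|y' t] //=.
- by rewrite !addn0 => _ ->.
- move=> [-> /(inj_map (@addnI y))] E /eqP; rewrite eqn_add2l => /eqP S.
  by congr (_ :: _); apply: IH.
Qed.

Lemma comps_mem n a : a \in comps n -> all (fun x => 0 < x) a /\ sumn a = n.
Proof.
by rewrite /comps mem_undup mem_filter /is_comp => /andP[/andP[-> /eqP ->]].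
Qed.

Lemma comps_uniq n : uniq (comps n).
Proof. exact: undup_uniq. Qed.

Lemma comps_nil n a : (0 < n)%N -> a \in comps n -> a != [::].
Proof. by move=> n0 /comps_mem [_ S]; apply/eqP => E; move: S n0; rewrite E => <-. Qed.

Lemma leC_eq n a b : (0 < n)%N -> a \in comps n -> b \in comps n -> leC b a ->
  (size a <= size b)%N -> a = b.
Proof.
move=> n0 aC bC /allP sub le.
have [ap sa] := comps_mem aC; have [bp sb] := comps_mem bC.
have /andP[_ sIa] := Iset_pos_sorted ap; have /andP[_ sIb] := Iset_pos_sorted bp.
have uIb : uniq (Iset b) by apply: sorted_uniq sIb; [exact: ltn_trans|exact: ltnn].
have szI : (size (Iset a) <= size (Iset b))%N.
  by rewrite !size_map !size_iota -!subn1 leq_sub2r.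
have [_ eqI] := uniq_min_size uIb sub szI.
have EI : Iset b = Iset a.
  by apply: (irr_sorted_eq ltn_trans ltnn).
by apply: Iset_inj; rewrite ?(comps_nil n0) // sa sb.
Qed.

Lemma mo_aux_nil acc a : mo_aux acc a != [::].
Proof.
elim: a acc => [|x r IH] acc //=; case: r IH => [|y t] IH //.
by case: ifP.
Qed.

Lemma mo_aux_cons2 acc x y t : mo_aux acc [:: x, y & t] =
  if odd x && ~~ odd y then (acc + x) :: mo_aux 0 (y :: t) else mo_aux (acc + x) (y :: t).
Proof. by []. Qed.

Lemma mo_aux_sub acc a : a != [::] ->
  {subset Iset (mo_aux acc a) <= map (addn acc) (Iset a)}.
Proof.
elim: a acc => [|x r IH] acc // _; case: r IH => [|y t] IH.
  by rewrite /= /Iset /=.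
rewrite mo_aux_cons2; case: ifP => _.
- move: (IH 0 isT) (mo_aux_nil 0 (y :: t)).
  case: (mo_aux 0 (y :: t)) => [|z u] // IH0 _.
  rewrite [Iset (_ + _ :: _)]Iset_cons => e;
  rewrite inE => /orP[/eqP ->|].
    by rewrite [Iset (x :: _)]Iset_cons /= inE eqxx.
  case/mapP => f /IH0 /mapP [g gI ->] ->.
  rewrite [Iset (x :: _)]Iset_cons map_cons inE; apply/orP; right.
  by rewrite -map_comp; apply/mapP; exists g => //=; rewrite add0n addnA.
- move=> e /(IH (acc + x) isT) /mapP [g gI ->].
  rewrite [Iset (x :: _)]Iset_cons map_cons inE; apply/orP; right.
  by rewrite -map_comp; apply/mapP; exists g => //=; rewrite addnA.
Qed.

Lemma mo_leC a : leC (mo a) a.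
Proof.
apply/allP; case: a => [|x r] // e /(mo_aux_sub (isT : x :: r != [::])).
by rewrite map_id_in // => ? _; rewrite add0n.
Qed.

Lemma leC_refl a : leC a a.
Proof. by apply/allP. Qed.

Local Open Scope ring_scope.

Section Alg.
Variable R : realType.
Local Notation C := (R[i]).

Lemma coefc_neq0 a b : coefc R a b != 0.
Proof.
rewrite /coefc; apply/negP => /eqP P0; move/eqP: P0; apply/negP.
rewrite prodf_seq_neq0; apply/allP => B _ /=.
by rewrite invr_eq0 pnatr_eq0 muln_eq0 negb_or -!lt0n !fact_gt0.
Qed.

Lemma Mqs_self b' b : all (fun x => 0 < x)%N b -> Mqs R b' b = if b == b' then 1 else 0.
Proof. by move=> /all_filterP bp; rewrite /Mqs bp. Qed.

Lemma Sqs_exp n a s : a \in comps n ->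
  Sqs R a s = \sum_(b <- comps n) (if leC (mo a) b && leC b a then coefc R a b else 0) * Mqs R b s.
Proof.
move=> /comps_mem [_ sa]; rewrite /Sqs sa big_mkcond; apply: eq_bigr => b _.
by case: ifP; rewrite ?mul0r.
Qed.

Lemma SqsE n a b : a \in comps n -> b \in comps n ->
  Sqs R a b = if leC (mo a) b && leC b a then coefc R a b else 0.
Proof.
move=> aC bC; rewrite (Sqs_exp b aC) (bigD1_seq b) //= ?comps_uniq //.
have [bp _] := comps_mem bC.
rewrite Mqs_self // eqxx mulr1 big1 ?addr0 // => b' nb.
by rewrite Mqs_self // eq_sym (negPf nb) mulr0.
Qed.

Definition spanS n (g : series R) :=
  exists d : seq nat -> C, forall s, g s = \sum_(a <- comps n) d a * Sqs R a s.

Lemma span_ext n g h : (forall s, g s = h s) -> spanS n g -> spanS n h.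
Proof. by move=> E [d Hd]; exists d => s; rewrite -E. Qed.

Lemma span_lin2 n g h k1 k2 : spanS n g -> spanS n h ->
  spanS n (fun s => k1 * g s + k2 * h s).
Proof.
move=> [d1 H1] [d2 H2]; exists (fun a => k1 * d1 a + k2 * d2 a) => s.
rewrite H1 H2 !mulr_sumr -big_split /=; apply: eq_bigr => a _.
by rewrite mulrDl !mulrA.
Qed.

Lemma span0 n : spanS n (fun _ => 0).
Proof. by exists (fun _ => 0) => s; rewrite big1 // => a _; rewrite mul0r. Qed.

Lemma spanSa n a : a \in comps n -> spanS n (Sqs R a).
Proof.
move=> aC; exists (fun b => if b == a then 1 else 0) => s.
rewrite (bigD1_seq a) ?comps_uniq //= eqxx mul1r big1 ?addr0 // => b /negPf ->.
by rewrite mul0r.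
Qed.

Lemma span_sum n (l : seq (seq nat)) (c : seq nat -> C) (g : seq nat -> series R) :
  (forall a, a \in l -> c a != 0 -> spanS n (g a)) ->
  spanS n (fun s => \sum_(a <- l) c a * g a s).
Proof.
elim: l => [|x l IH] H.
  by apply: span_ext (span0 n) => s; rewrite big_nil.
have IH' : spanS n (fun s => \sum_(a <- l) c a * g a s).
  by apply: IH => a al; apply: H; rewrite inE al orbT.
have [cx0|cx0] := eqVneq (c x) 0.
  apply: span_ext IH' => s; rewrite big_cons cx0 mul0r add0r //.
have := span_lin2 (c x) 1 (H x (mem_head _ _) cx0) IH'.
by apply: span_ext => s; rewrite big_cons mul1r.
Qed.


Lemma spanM n : (0 < n)%N -> forall a, a \in comps n -> spanS n (Mqs R a).
Proof.
move=> n0; suff H : forall k a, a \in comps n -> (size a < k)%N -> spanS n (Mqs R a).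
  by move=> a aC; apply: (H (size a).+1).
elim=> [|k IH] a aC // szk.
pose P b := leC (mo a) b && leC b a.
pose c' b := if (b != a) && P b then coefc R a b else 0.
have Pa : P a by rewrite /P mo_leC leC_refl.
have E s : Sqs R a s = coefc R a a * Mqs R a s + \sum_(b <- comps n) c' b * Mqs R b s.
  rewrite (Sqs_exp s aC) (bigD1_seq a) ?comps_uniq //= -/(P a) Pa; congr (_ + _).
  rewrite big_mkcond; apply: eq_bigr => b _ /=; rewrite /c'.
  by case: (b != a); rewrite ?mul0r.
have Hs : spanS n (fun s => \sum_(b <- comps n) c' b * Mqs R b s).
  apply: span_sum => b bC; rewrite /c'; case: ifP => [/andP[nb /andP[_ lb]] _|]; last first.
    by rewrite eqxx.
  apply: IH => //; rewrite ltnS in szk; apply: leq_trans szk.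
  rewrite ltnNge; apply/negP => le; move/eqP: nb; apply.
  by symmetry; apply: (leC_eq n0 aC bC lb le).
have := span_lin2 (coefc R a a)^-1 (- (coefc R a a)^-1) (spanSa aC) Hs.
apply: span_ext => s; rewrite E mulrDr mulrA mulVf ?coefc_neq0 // mul1r.
by rewrite mulNr addrK.
Qed.

End Alg.

Lemma size_le_sumn a : all (fun x => 0 < x)%N a -> (size a <= sumn a)%N.
Proof. by elim: a => [|x r IH] //= /andP[x0 /IH]; lia. Qed.

Unset Implicit Arguments.

Theorem mainTheorem1 (R : realType) (n : nat) (hn : (0 < n)%N) :
  (forall a, a \in comps n -> QSym n (@Sqs R a)) /\
  (forall c : seq nat -> R[i],
      (forall s, \sum_(a <- comps n) c a * Sqs R a s = 0) ->
      forall a, a \in comps n -> c a = 0) /\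
  (forall f : series R, QSym (R:=R) n f ->
      exists d : seq nat -> R[i], forall s, f s = \sum_(a <- comps n) d a * Sqs R a s).
Proof.
split; [|split].
- move=> a aC; exists (fun b => if leC (mo a) b && leC b a then coefc R a b else 0) => s.
  exact: Sqs_exp.
- move=> c H.
  suff K : forall k a, a \in comps n -> (n < size a + k)%N -> c a = 0.
    by move=> a aC; apply: (K n.+1) => //; rewrite ltn_addl.
  elim=> [|k IH] a aC lt.
    have [ap sa] := comps_mem aC; suff : False by []; move: lt; rewrite addn0 ltnNge -{1}sa size_le_sumn //.
  have [lt'|ge] := ltnP n (size a + k); first exact: IH.
  have := H a; rewrite (bigD1_seq a) ?comps_uniq //= (SqsE R aC aC) mo_leC leC_refl /=.
  rewrite big1_seq ?addr0 => [/eqP|a' /andP[na a'C]].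
    by rewrite mulf_eq0 (negPf (coefc_neq0 _ _ _)) orbF => /eqP.
  rewrite (SqsE R a'C aC); case: ifP => [/andP[_ l]|_]; last by rewrite mulr0.
  rewrite IH ?mul0r //.
  have : (size a < size a')%N.
    rewrite ltnNge; apply/negP => le; move/eqP: na; apply.
    exact: (leC_eq hn a'C aC l le).
  move: ge lt; lia.
- move=> f [c Hc].
  have : spanS (R:=R) n (fun s => \sum_(a <- comps n) c a * Mqs R a s).
    by apply: span_sum => a aC _; apply: spanM.
  by apply: span_ext => s; rewrite Hc.
Qed.
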